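(* Let $P$ be as in the context. If $x_a\ge x_\theta\ge0$ and $x_b\ge0$, then $$P(x_a,x_b,x_\theta)\ge\tfrac12\big(1-\Phi(x_a-x_\theta)\big)+\tfrac12\big(1-\Phi(x_a+x_\theta)\big).$$ If $0\le x_a<x_\theta$ and $x_b\ge0$, then $P(x_a,x_b,x_\theta)\ge\tfrac14$.
   Context: $\phi$ and $\Phi$ are the standard normal density and CDF. For $y,x_b\in\mathbb{R}$, $w(y,x_b)=\frac{e^{yx_b}}{e^{yx_b}+e^{-yx_b}}$, and $P(x_a,x_b,x_\theta)=\int_{\mathbb{R}}w(y-x_a,x_b)\,\tfrac12\big(\phi(y-x_\theta)+\phi(y+x_\theta)\big)dy$. *)

(* Defs.v *)
From Stdlib Require Import Reals.
From Coquelicot Require Import Coquelicot.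
Open Scope R_scope.

Definition phi (x : R) : R := exp (- x ^ 2 / 2) / sqrt (2 * PI).

Definition Phi (x : R) : R :=
  RInt_gen phi (Rbar_locally m_infty) (at_point x).

Definition w (y xb : R) : R :=
  exp (y * xb) / (exp (y * xb) + exp (- (y * xb))).

Definition P (xa xb xt : R) : R :=
  RInt_gen (fun y => w (y - xa) xb * (/ 2 * (phi (y - xt) + phi (y + xt))))
    (Rbar_locally m_infty) (Rbar_locally p_infty).

(* Main.v *)
Require Import Defs.
From Stdlib Require Import Reals Lra.
From Coquelicot Require Import Coquelicot.
Open Scope R_scope.
Definition gs (t:R) := exp (-(t^2)).
Definition Ag x := RInt gs 0 x.
Definition kB (u t : R) := exp (-(u^2) * (1 + t^2)) / (1 + t^2).
Definition Bg x := RInt (fun t => kB x t) 0 1.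

Lemma exR (f : R -> R) a b : (forall z, continuous f z) -> ex_RInt f a b.
Proof. intros H. apply (@ex_RInt_continuous R_CompleteNormedModule). intros; apply H. Qed.

Lemma exp_le_exp a b : a <= b -> exp a <= exp b.
Proof. intros [h|h]. left; apply exp_increasing; auto. subst; right; reflexivity. Qed.

Lemma pos1t t : 1 + t^2 <> 0.
Proof. nra. Qed.

Lemma gs_cont x : continuous gs x.
Proof. apply (@ex_derive_continuous R_AbsRing R_NormedModule). unfold gs. auto_derive. trivial. Qed.

Lemma gs_ex a b : ex_RInt gs a b.
Proof. apply exR. intros; apply gs_cont. Qed.

Lemma Ag_deriv x : is_derive Ag x (gs x).
Proof.
  apply is_derive_RInt with 0.
  - apply filter_forall. intros. apply RInt_correct, gs_ex.
  - apply gs_cont.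
Qed.

Lemma kB_cont u t : continuous (kB u) t.
Proof. apply (@ex_derive_continuous R_AbsRing R_NormedModule). unfold kB. auto_derive; repeat split; try apply pos1t. Qed.

Lemma kB_Derive u v : Derive (fun z => kB z v) u = -2 * u * exp (-(u^2) * (1 + v^2)).
Proof.
  apply is_derive_unique. unfold kB. auto_derive; repeat split; try apply pos1t.
  replace (u*(u*1)) with (u^2) by ring. replace (v*(v*1)) with (v^2) by ring.
  field. apply pos1t.
Qed.


Lemma c2_sq (f : R -> R -> R) x y : continuity_2d_pt f x y -> continuity_2d_pt (fun u v => (f u v)^2) x y.
Proof.
  intros H. apply continuity_2d_pt_ext with (fun u v => f u v * (f u v * 1)).
  intros; simpl; reflexivity.
  apply continuity_2d_pt_mult; auto. apply continuity_2d_pt_mult; auto. apply continuity_2d_pt_const.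
Qed.

Lemma Bg_deriv x : is_derive Bg x (-2 * gs x * Ag x).
Proof.
  unfold Bg.
  assert (E : RInt (fun t => Derive (fun u => kB u t) x) 0 1 = -2 * gs x * Ag x).
  { rewrite (RInt_ext _ (fun t => scal (-2 * gs x) (scal x (gs (x * t + 0))))).
    2:{ intros t _. rewrite kB_Derive. unfold gs, scal; simpl; unfold mult; simpl.
        transitivity (-2 * x * (exp (- (x * (x * 1))) * exp (- ((x * t + 0) * ((x * t + 0) * 1))))).
        rewrite <- exp_plus. f_equal. f_equal. ring. ring. }
    rewrite (@RInt_scal R_CompleteNormedModule). rewrite (@RInt_comp_lin R_CompleteNormedModule). unfold Ag, scal; simpl; unfold mult; simpl.
    assert (H0: x*0+0 = 0) by ring. assert (H1: x*1+0 = x) by ring.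
    rewrite H0, H1. reflexivity. 
    assert (H0: x*0+0 = 0) by ring. assert (H1: x*1+0 = x) by ring.
    rewrite H0, H1. apply gs_ex.
    apply exR. intros z. apply (continuous_ext (fun t => x * exp (-((x*t+0)^2)))). intros; reflexivity.
    apply (@ex_derive_continuous R_AbsRing R_NormedModule); auto_derive; trivial. }
  rewrite <- E.
  apply (is_derive_RInt_param (fun u t => kB u t)).
  - apply filter_forall. intros y t _. unfold kB. auto_derive; repeat split; try apply pos1t.
  - intros t _. eapply continuity_2d_pt_ext.
    intros; symmetry; apply kB_Derive.
    apply continuity_2d_pt_mult.
    apply continuity_2d_pt_mult. apply continuity_2d_pt_const. apply continuity_2d_pt_id1.
    apply continuity_1d_2d_pt_comp. apply derivable_continuous_pt, derivable_pt_exp.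
    apply continuity_2d_pt_mult.
    apply continuity_2d_pt_opp. apply c2_sq. apply continuity_2d_pt_id1.
    apply continuity_2d_pt_plus. apply continuity_2d_pt_const.
    apply c2_sq. apply continuity_2d_pt_id2.
  - apply filter_forall. intros y. apply exR. intros; apply kB_cont.
Qed.

Lemma H_deriv x : is_derive (fun x => Ag x ^ 2 + Bg x) x zero.
Proof.
  assert (D : is_derive (fun x => Ag x ^ 2 + Bg x) x (plus (INR 2 * gs x * Ag x ^ Init.Nat.pred 2) (-2 * gs x * Ag x))).
  { apply (is_derive_plus (fun x => Ag x ^ 2) Bg).
    apply (is_derive_pow Ag 2). apply Ag_deriv. apply Bg_deriv. }
  assert (E: plus (INR 2 * gs x * Ag x ^ Init.Nat.pred 2) (-2 * gs x * Ag x) = zero).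
  { unfold plus, zero; simpl. ring. }
  rewrite E in D. exact D.
Qed.

Lemma H_const x : Ag x ^ 2 + Bg x = PI / 4.
Proof.
  assert (H0 : Ag 0 ^ 2 + Bg 0 = PI / 4).
  { unfold Ag. rewrite RInt_point. unfold zero; simpl.
    unfold Bg. rewrite (RInt_ext _ (fun t => / (1 + t^2))).
    2:{ intros t _. unfold kB. replace (- (0^2) * (1+t^2)) with 0 by ring. rewrite exp_0. unfold Rdiv. apply Rmult_1_l. }
    rewrite (is_RInt_unique _ _ _ (atan 1 - atan 0)). rewrite atan_1, atan_0. ring.
    apply (@is_RInt_derive R_CompleteNormedModule atan (fun t => / (1 + t^2))).
    intros; apply is_derive_Reals, derivable_pt_lim_atan.
    intros. apply (@ex_derive_continuous R_AbsRing R_NormedModule); auto_derive; apply pos1t. }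
  destruct (Rtotal_order x 0) as [h|[h|h]].
  - rewrite <- H0. apply (eq_is_derive (fun x => Ag x ^ 2 + Bg x)); auto. intros; apply H_deriv.
  - subst; auto.
  - rewrite <- H0. symmetry. apply (eq_is_derive (fun x => Ag x ^ 2 + Bg x)); auto. intros; apply H_deriv.
Qed.

Lemma kB_ex x : ex_RInt (fun t => kB x t) 0 1.
Proof. apply exR. intros; apply kB_cont. Qed.

Lemma Bg_bounds x : 0 <= Bg x <= exp (-(x^2)).
Proof.
  split.
  - apply RInt_ge_0. lra. apply kB_ex. intros t _. unfold kB.
    apply Rlt_le, Rdiv_lt_0_compat. apply exp_pos. nra.
  - unfold Bg. apply Rle_trans with (RInt (fun _ => exp (-(x^2))) 0 1).
    apply RInt_le. lra. apply kB_ex. apply exR; intros; apply continuous_const.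
    intros t Ht. unfold kB.
    apply Rle_trans with (exp (- x ^ 2 * (1 + t ^ 2))).
    unfold Rdiv. rewrite <- (Rmult_1_r (exp _)) at 2. apply Rmult_le_compat_l.
    apply Rlt_le, exp_pos. rewrite <- Rinv_1. apply Rinv_le_contravar; nra.
    apply exp_le_exp. assert (0 <= x^2) by nra. assert (0 <= t^2) by nra. nra.
    rewrite RInt_const. unfold scal; simpl; unfold mult; simpl. lra.
Qed.

Lemma lim_exp_opp : is_lim (fun x => exp (- x)) p_infty 0.
Proof.
  apply (is_lim_comp exp (fun x => - x) p_infty 0 m_infty).
  apply is_lim_exp_m.
  apply (is_lim_opp (fun y => y) p_infty p_infty). apply is_lim_id.
  exists 0. intros; discriminate.
Qed.

Lemma lim_Bg : is_lim Bg p_infty 0.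
Proof.
  apply (is_lim_le_le_loc (fun _ => 0) (fun x => exp (- x))).
  exists 1. intros y Hy. split. apply Bg_bounds.
  apply Rle_trans with (exp (-(y^2))). apply Bg_bounds.
  apply exp_le_exp. nra.
  apply is_lim_const. apply lim_exp_opp.
Qed.

Lemma Ag_nonneg x : 0 <= x -> 0 <= Ag x.
Proof.
  intros. apply RInt_ge_0; auto. apply gs_ex. intros; apply Rlt_le, exp_pos.
Qed.

Lemma lim_Ag : is_lim Ag p_infty (sqrt (PI / 4)).
Proof.
  apply is_lim_ext_loc with (fun x => sqrt (PI / 4 - Bg x)).
  exists 0. intros y Hy. rewrite <- (H_const y).
  replace (Ag y ^ 2 + Bg y - Bg y) with (Ag y ^ 2) by ring.
  apply sqrt_pow2. apply Ag_nonneg. lra.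
  unfold is_lim. simpl.
  eapply filterlim_comp.
  2:{ apply continuity_pt_filterlim. apply continuity_pt_sqrt. generalize PI_RGT_0; lra. }
  assert (L : is_lim (fun x => PI/4 - Bg x) p_infty (PI/4 - 0)).
  apply (is_lim_minus' (fun _ => PI/4) Bg p_infty). apply is_lim_const. apply lim_Bg.
  rewrite Rminus_0_r in L. exact L.
Qed.

Lemma phi_cont x : continuous phi x.
Proof. apply (@ex_derive_continuous R_AbsRing R_NormedModule). unfold phi. auto_derive.
  assert (0 < sqrt (2*PI)) by (apply sqrt_lt_R0; generalize PI_RGT_0; lra). lra. Qed.

Lemma phi_ex a b : ex_RInt phi a b.
Proof. apply exR. intros; apply phi_cont. Qed.

Lemma sqrtPI_pos : 0 < sqrt PI.
Proof. apply sqrt_lt_R0, PI_RGT_0. Qed.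

Lemma phi_pos x : 0 < phi x.
Proof. unfold phi. apply Rdiv_lt_0_compat. apply exp_pos. apply sqrt_lt_R0; generalize PI_RGT_0; lra. Qed.

Definition F0 x := RInt phi 0 x.

Lemma F0_Ag x : F0 x = / sqrt PI * Ag (/ sqrt 2 * x + 0).
Proof.
  assert (s2 : 0 < sqrt 2) by (apply sqrt_lt_R0; lra).
  unfold F0, Ag. rewrite <- (Rmult_0_r (/ sqrt 2)) at 2. rewrite <- (Rplus_0_r (/sqrt 2 * 0)).
  rewrite <- (@RInt_comp_lin R_CompleteNormedModule).
  2:{ apply gs_ex. }
  rewrite <- (@RInt_scal R_CompleteNormedModule).
  2:{ apply exR. intros z. apply (continuous_ext (fun t => / sqrt 2 * exp (-((/ sqrt 2*t+0)^2)))). intros; reflexivity.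
    apply (@ex_derive_continuous R_AbsRing R_NormedModule); auto_derive; trivial. }
  apply RInt_ext. intros y _. unfold scal; simpl; unfold mult; simpl. unfold phi, gs.
  replace (- ((/ sqrt 2 * y + 0) ^ 2)) with (- y ^ 2 / 2).
  rewrite sqrt_mult by (generalize PI_RGT_0; lra). field. repeat split; apply Rgt_not_eq; try apply sqrtPI_pos; try lra.
  replace ((/ sqrt 2 * y + 0) ^ 2) with (y^2 / (sqrt 2 * sqrt 2)) by (field; lra).
  rewrite sqrt_sqrt by lra. field.
Qed.

Lemma lim_F0_p : is_lim F0 p_infty (/2).
Proof.
  assert (s2 : 0 < sqrt 2) by (apply sqrt_lt_R0; lra).
  apply is_lim_ext with (fun x => / sqrt PI * Ag (/ sqrt 2 * x + 0)).
  intros; symmetry; apply F0_Ag.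
  replace (/2) with (/ sqrt PI * sqrt (PI / 4)).
  apply (is_lim_scal_l (fun x => Ag (/ sqrt 2 * x + 0)) (/ sqrt PI) p_infty (sqrt (PI/4))).
  apply (is_lim_comp Ag (fun x => / sqrt 2 * x + 0) p_infty (sqrt (PI/4)) p_infty).
  apply lim_Ag.
  apply is_lim_spec. intros M. exists (Rabs M * sqrt 2). intros x Hx.
  assert (Rabs M * sqrt 2 * / sqrt 2 < x * / sqrt 2).
  { apply Rmult_lt_compat_r. apply Rinv_0_lt_compat; lra. lra. }
  replace (Rabs M * sqrt 2 * / sqrt 2) with (Rabs M) in H by (field; lra).
  generalize (Rle_abs M). lra.
  exists 0. intros; discriminate.
  assert (E : sqrt (PI / 4) = sqrt PI / 2).
  { rewrite <- (sqrt_pow2 (sqrt PI / 2)). f_equal. 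
    replace ((sqrt PI / 2)^2) with (sqrt PI * sqrt PI / 4) by field.
    rewrite sqrt_sqrt. reflexivity. generalize PI_RGT_0; lra.
    generalize sqrtPI_pos; lra. }
  rewrite E. field. generalize sqrtPI_pos; lra.
Qed.

Lemma F0_odd x : F0 (- x) = - F0 x.
Proof.
  unfold F0. replace (-x) with (-1 * x + 0) by ring.
  replace 0 with (-1 * 0 + 0) at 1 by ring.
  rewrite <- (@RInt_comp_lin R_CompleteNormedModule).
  2:{ apply phi_ex. }
  rewrite (RInt_ext _ (fun y => opp (phi y))).
  rewrite (@RInt_opp R_CompleteNormedModule). replace (-1*0+0) with 0 by ring. reflexivity. apply phi_ex.
  intros y _. unfold scal, opp; simpl; unfold mult; simpl. unfold phi. 
  replace ((-1*y+0)^2) with (y^2) by ring. ring.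
Qed.

Lemma lim_F0_m : is_lim F0 m_infty (-/2).
Proof.
  apply is_lim_ext with (fun x => - F0 (- x)).
  intros; rewrite F0_odd; ring.
  apply (is_lim_opp (fun x => F0 (-x)) m_infty (/2)).
  apply (is_lim_comp F0 (fun x => - x) m_infty (/2) p_infty).
  apply lim_F0_p.
  apply (is_lim_opp (fun y => y) m_infty m_infty). apply is_lim_id.
  exists 0. intros; discriminate.
Qed.

Lemma F0_mono x y : x <= y -> F0 x <= F0 y.
Proof.
  intros H. unfold F0. rewrite <- (RInt_Chasles phi 0 x y) by apply phi_ex.
  unfold plus; simpl. assert (0 <= RInt phi x y).
  apply RInt_ge_0; auto. apply phi_ex. intros; apply Rlt_le, phi_pos. lra.
Qed.

Lemma mono_le_lim_p (F : R -> R) (L : R) x : (forall a b, a <= b -> F a <= F b) -> is_lim F p_infty L -> F x <= L.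
Proof.
  intros Hm Hl. apply (is_lim_le_loc (fun _ => F x) F p_infty (F x) L); auto.
  exists x. intros; apply Hm; lra. apply is_lim_const.
Qed.

Lemma mono_le_lim_m (F : R -> R) (L : R) x : (forall a b, a <= b -> F a <= F b) -> is_lim F m_infty L -> L <= F x.
Proof.
  intros Hm Hl. apply (is_lim_le_loc F (fun _ => F x) m_infty L (F x)); auto.
  exists x. intros; apply Hm; lra. apply is_lim_const.
Qed.

Lemma F0_bound x : - / 2 <= F0 x <= / 2.
Proof.
  split. apply (mono_le_lim_m F0). apply F0_mono. apply lim_F0_m.
  apply (mono_le_lim_p F0). apply F0_mono. apply lim_F0_p.
Qed.


Lemma mono_lim_p (F : R -> R) B : (forall a b, a <= b -> F a <= F b) -> (forall x, F x <= B) ->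
  exists L : R, is_lim F p_infty L.
Proof.
  intros Hm HB.
  destruct (completeness (fun y => exists x, y = F x)) as [L [HL1 HL2]].
  - exists B. intros y [x ->]. apply HB.
  - exists (F 0). exists 0. reflexivity.
  - exists L. apply is_lim_spec. intros eps.
    assert (exists x0, L - eps < F x0) as [x0 Hx0].
    { destruct (Classical_Prop.classic (exists x0, L - eps < F x0)) as [h|h]; auto.
      exfalso. assert (L <= L - eps). apply HL2. intros y [x ->].
      apply Rnot_lt_le. intros hh. apply h. exists x; auto.
      destruct eps; simpl in *; lra. }
    exists x0. intros y Hy. assert (F x0 <= F y) by (apply Hm; lra).
    assert (F y <= L) by (apply HL1; exists y; auto).
    apply Rabs_lt_between'. lra.
Qed.

Lemma mono_lim_m (F : R -> R) B : (forall a b, a <= b -> F a <= F b) -> (forall x, B <= F x) ->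
  exists L : R, is_lim F m_infty L.
Proof.
  intros Hm HB.
  destruct (completeness (fun y => exists x, y = - F x)) as [L [HL1 HL2]].
  - exists (-B). intros y [x ->]. generalize (HB x); lra.
  - exists (- F 0). exists 0. reflexivity.
  - exists (-L). apply is_lim_spec. intros eps.
    assert (exists x0, L - eps < - F x0) as [x0 Hx0].
    { destruct (Classical_Prop.classic (exists x0, L - eps < - F x0)) as [h|h]; auto.
      exfalso. assert (L <= L - eps). apply HL2. intros y [x ->].
      apply Rnot_lt_le. intros hh. apply h. exists x; auto.
      destruct eps; simpl in *; lra. }
    exists x0. intros y Hy. assert (F y <= F x0) by (apply Hm; lra).
    assert (- F y <= L) by (apply HL1; exists y; auto).
    apply Rabs_lt_between'. lra.
Qed.

Lemma RInt_deriv0 (f : R -> R) x : (forall z, continuous f z) -> is_derive (RInt f 0) x (f x).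
Proof.
  intros Hc. apply is_derive_RInt with 0.
  apply filter_forall. intros. apply RInt_correct, exR, Hc. apply Hc.
Qed.

Lemma gen_full (f : R -> R) (Lm Lp : R) : (forall x, continuous f x) ->
  is_lim (RInt f 0) m_infty Lm -> is_lim (RInt f 0) p_infty Lp ->
  is_RInt_gen f (Rbar_locally m_infty) (Rbar_locally p_infty) (Lp - Lm).
Proof.
  intros Hc Hm Hp.
  apply (is_RInt_gen_ext (Derive (RInt f 0))).
  apply filter_forall. intros ab x _. apply is_derive_unique, RInt_deriv0, Hc.
  apply is_RInt_gen_Derive.
  apply filter_forall. intros ab x _. eexists. apply RInt_deriv0, Hc.
  apply filter_forall. intros ab x _. apply (continuous_ext f).
  intros; symmetry; apply is_derive_unique, RInt_deriv0, Hc. apply Hc.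
  exact Hm. exact Hp.
Qed.

Lemma gen_left (f : R -> R) (Lm c : R) : (forall x, continuous f x) ->
  is_lim (RInt f 0) m_infty Lm ->
  is_RInt_gen f (Rbar_locally m_infty) (at_point c) (RInt f 0 c - Lm).
Proof.
  intros Hc Hm.
  apply (is_RInt_gen_ext (Derive (RInt f 0))).
  apply filter_forall. intros ab x _. apply is_derive_unique, RInt_deriv0, Hc.
  apply is_RInt_gen_Derive.
  apply filter_forall. intros ab x _. eexists. apply RInt_deriv0, Hc.
  apply filter_forall. intros ab x _. apply (continuous_ext f).
  intros; symmetry; apply is_derive_unique, RInt_deriv0, Hc. apply Hc.
  exact Hm.
  intros P HP. apply locally_singleton in HP. exact HP.
Qed.

Definition contf (f : R -> R) := forall x, continuous f x.

Lemma RInt_lin (f : R -> R) u v a b : contf f ->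
  RInt (fun y => u * f (u * y + v)) a b = RInt f (u * a + v) (u * b + v).
Proof. intros Hc. apply (@RInt_comp_lin R_CompleteNormedModule). apply exR, Hc. Qed.

Lemma RInt_sc (f : R -> R) k a b : contf f -> RInt (fun y => k * f y) a b = k * RInt f a b.
Proof. intros Hc. apply (@RInt_scal R_CompleteNormedModule). apply exR, Hc. Qed.

Lemma RInt_pl (f g : R -> R) a b : contf f -> contf g ->
  RInt (fun y => f y + g y) a b = RInt f a b + RInt g a b.
Proof. intros Hf Hg. apply (@RInt_plus R_CompleteNormedModule); apply exR; auto. Qed.

Lemma RInt_ch (f : R -> R) a b c : contf f -> RInt f a b + RInt f b c = RInt f a c.
Proof. intros Hf. apply (@RInt_Chasles R_CompleteNormedModule); apply exR; auto. Qed.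

Lemma RInt_sw (f : R -> R) a b : contf f -> RInt f a b = - RInt f b a.
Proof. intros Hf. generalize (RInt_ch f a b a Hf). rewrite RInt_point. unfold zero; simpl. lra. Qed.

Lemma RInt_le' (f g : R -> R) a b : a <= b -> contf f -> contf g ->
  (forall x, a < x < b -> f x <= g x) -> RInt f a b <= RInt g a b.
Proof. intros. apply RInt_le; auto; apply exR; auto. Qed.

Lemma sym_split (h : R -> R) c M : contf h ->
  RInt h 0 (c + M) - RInt h 0 (c - M) = RInt (fun s => h (c - s) + h (c + s)) 0 M.
Proof.
  intros Hc.
  assert (C1 : contf (fun s => h (c - s))).
  { intros x. apply (continuous_comp (fun s => c - s) h). 
    apply (@ex_derive_continuous R_AbsRing R_NormedModule); auto_derive; trivial. apply Hc. }
  assert (C2 : contf (fun s => h (c + s))).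
  { intros x. apply (continuous_comp (fun s => c + s) h). 
    apply (@ex_derive_continuous R_AbsRing R_NormedModule); auto_derive; trivial. apply Hc. }
  rewrite RInt_pl by auto.
  assert (E1 : RInt (fun s => h (c - s)) 0 M = - RInt h c (c - M)).
  { generalize (RInt_lin h (-1) c 0 M Hc).
    replace (-1 * 0 + c) with c by ring. replace (-1 * M + c) with (c - M) by ring.
    intros E. rewrite <- E.
    rewrite (RInt_ext (fun y => -1 * h (-1 * y + c)) (fun y => -1 * h (c - y))).
    rewrite RInt_sc by auto. change (@eq R (RInt (fun s => h (c - s)) 0 M) (- (-1 * RInt (fun y => h (c - y)) 0 M))). lra.
    intros; f_equal; f_equal; ring. }
  assert (E2 : RInt (fun s => h (c + s)) 0 M = RInt h c (c + M)).
  { generalize (RInt_lin h 1 c 0 M Hc).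
    replace (1 * 0 + c) with c by ring. replace (1 * M + c) with (c + M) by ring.
    intros E. rewrite <- E. apply RInt_ext. intros; rewrite Rmult_1_l; f_equal; ring. }
  rewrite E1, E2. rewrite <- (RInt_ch h 0 c (c+M)) by auto. rewrite <- (RInt_ch h 0 c (c-M)) by auto.
  ring.
Qed.
Lemma w_alt y b : w y b = / (1 + exp (-2 * (y * b))).
Proof.
  unfold w. replace (exp (- (y * b))) with (exp (y * b) * exp (-2 * (y * b))).
  generalize (exp_pos (y*b)) (exp_pos (-2*(y*b))); intros.
  field. repeat split; apply Rgt_not_eq; nra.
  rewrite <- exp_plus. f_equal. ring.
Qed.

Lemma w_pos y b : 0 < w y b.
Proof. rewrite w_alt. apply Rinv_0_lt_compat. generalize (exp_pos (-2*(y*b))); lra. Qed.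

Lemma w_neg y b : w (- y) b = 1 - w y b.
Proof.
  unfold w. replace (- y * b) with (- (y * b)) by ring. rewrite Ropp_involutive.
  generalize (exp_pos (y*b)) (exp_pos (-(y*b))). intros. field. repeat split; apply Rgt_not_eq; lra.
Qed.

Lemma w_le1 y b : w y b <= 1.
Proof. generalize (w_pos (-y) b). rewrite w_neg. lra. Qed.

Lemma w_mono u v b : 0 <= b -> u <= v -> w u b <= w v b.
Proof.
  intros Hb Huv. rewrite !w_alt. apply Rinv_le_contravar.
  generalize (exp_pos (-2*(v*b))); lra.
  apply Rplus_le_compat_l. apply exp_le_exp. nra.
Qed.

Lemma w_cont xa xb y : continuous (fun y => w (y - xa) xb) y.
Proof.
  apply (@ex_derive_continuous R_AbsRing R_NormedModule). unfold w. auto_derive.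
  generalize (exp_pos ((y + - xa) * xb)) (exp_pos (- ((y + - xa) * xb))). intros; apply Rgt_not_eq; lra.
Qed.

Lemma phi_even s : phi (- s) = phi s.
Proof. unfold phi. replace ((-s)^2) with (s^2) by ring. reflexivity. Qed.

Lemma phi_shift_le a s : 0 <= a -> 0 <= s -> phi (a + s) <= phi (a - s).
Proof.
  intros. unfold phi. unfold Rdiv. apply Rmult_le_compat_r.
  apply Rlt_le, Rinv_0_lt_compat, sqrt_lt_R0. generalize PI_RGT_0; lra.
  apply exp_le_exp. nra.
Qed.

Lemma phi_cf c : contf (fun y => phi (y + c)).
Proof. intros x. apply (continuous_comp (fun y => y + c) phi).
  apply (@ex_derive_continuous R_AbsRing R_NormedModule); auto_derive; trivial. apply phi_cont. Qed.

Lemma RInt_phi_shift c a b : RInt (fun y => phi (y + c)) a b = F0 (b + c) - F0 (a + c).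
Proof.
  generalize (RInt_lin phi 1 c a b phi_cont).
  replace (1 * a + c) with (a + c) by ring. replace (1 * b + c) with (b + c) by ring.
  intros E. rewrite (RInt_ext _ (fun y => 1 * phi (1 * y + c))). rewrite E.
  unfold F0. generalize (RInt_ch phi 0 (a + c) (b + c) phi_cont). lra.
  intros; rewrite Rmult_1_l; f_equal; ring.
Qed.

Definition hP xa xb xt y := w (y - xa) xb * (/ 2 * (phi (y - xt) + phi (y + xt))).
Definition kP xt y := / 2 * (phi (y + - xt) + phi (y + xt)).

Lemma s2pi : sqrt (2 * PI) <> 0.
Proof. apply Rgt_not_eq, sqrt_lt_R0. generalize PI_RGT_0; lra. Qed.

Lemma kP_cf xt : contf (kP xt).
Proof.
  intros x. apply (@ex_derive_continuous R_AbsRing R_NormedModule). unfold kP, phi. auto_derive.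
  repeat split; apply s2pi.
Qed.

Lemma hP_cf xa xb xt : contf (hP xa xb xt).
Proof.
  intros x. apply (@ex_derive_continuous R_AbsRing R_NormedModule). unfold hP, w, phi. auto_derive.
  repeat split; try apply s2pi.
  generalize (exp_pos ((x + - xa) * xb)) (exp_pos (- ((x + - xa) * xb))). intros; apply Rgt_not_eq; lra.
Qed.

Lemma RInt_kP xt x : RInt (kP xt) 0 x = / 2 * ((F0 (x + - xt) - F0 (0 + - xt)) + (F0 (x + xt) - F0 (0 + xt))).
Proof.
  unfold kP. rewrite RInt_sc. rewrite RInt_pl by apply phi_cf.
  rewrite !RInt_phi_shift. reflexivity.
  intros z. apply (@ex_derive_continuous R_AbsRing R_NormedModule). unfold phi. auto_derive.
  repeat split; apply s2pi.
Qed.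

Lemma RInt_kP_bound xt x : -1 <= RInt (kP xt) 0 x <= 1.
Proof.
  rewrite RInt_kP.
  generalize (F0_bound (x + - xt)) (F0_bound (0 + - xt)) (F0_bound (x + xt)) (F0_bound (0 + xt)). lra.
Qed.

Lemma hP_nonneg xa xb xt y : 0 <= hP xa xb xt y.
Proof.
  unfold hP. apply Rmult_le_pos. apply Rlt_le, w_pos.
  generalize (phi_pos (y - xt)) (phi_pos (y + xt)). lra.
Qed.

Lemma hP_le_kP xa xb xt y : hP xa xb xt y <= kP xt y.
Proof.
  unfold hP, kP. replace (y + - xt) with (y - xt) by ring.
  generalize (phi_pos (y - xt)) (phi_pos (y + xt)) (w_le1 (y - xa) xb) (w_pos (y - xa) xb). intros.
  nra.
Qed.

Section Main.
Variables xa xb xt : R.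
Let h := hP xa xb xt.
Let H x := RInt h 0 x.

Lemma H_mono a b : a <= b -> H a <= H b.
Proof.
  intros Hab. unfold H. rewrite <- (RInt_ch h 0 a b) by apply hP_cf.
  assert (0 <= RInt h a b). apply RInt_ge_0; auto. apply exR, hP_cf. intros; apply hP_nonneg.
  lra.
Qed.

Lemma H_bound x : -1 <= H x <= 1.
Proof.
  unfold H. destruct (Rle_or_lt 0 x).
  - assert (0 <= RInt h 0 x). apply RInt_ge_0; auto. apply exR, hP_cf. intros; apply hP_nonneg.
    assert (RInt h 0 x <= RInt (kP xt) 0 x). apply RInt_le'; auto. apply hP_cf. apply kP_cf.
    intros; apply hP_le_kP.
    generalize (RInt_kP_bound xt x). lra.
  - rewrite RInt_sw by apply hP_cf.
    assert (0 <= RInt h x 0). apply RInt_ge_0; try lra. apply exR, hP_cf. intros; apply hP_nonneg.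
    assert (RInt h x 0 <= RInt (kP xt) x 0). apply RInt_le'; try lra. apply hP_cf. apply kP_cf.
    intros; apply hP_le_kP.
    generalize (RInt_kP_bound xt x). rewrite (RInt_sw (kP xt)) by apply kP_cf. lra.
Qed.

Lemma P_lim : exists Lm Lp : R, is_lim H m_infty Lm /\ is_lim H p_infty Lp /\ P xa xb xt = Lp - Lm.
Proof.
  destruct (mono_lim_p H 1) as [Lp HLp]. apply H_mono. intros; apply H_bound.
  destruct (mono_lim_m H (-1)) as [Lm HLm]. apply H_mono. intros; apply H_bound.
  exists Lm, Lp. split; auto. split; auto.
  unfold P. apply is_RInt_gen_unique.
  apply (gen_full h Lm Lp (hP_cf xa xb xt) HLm HLp).
Qed.

End Main.

Lemma Phi_F0 a : Phi a = F0 a + / 2.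
Proof.
  unfold Phi. apply is_RInt_gen_unique.
  replace (F0 a + / 2) with (RInt phi 0 a - - / 2) by (unfold F0; ring).
  apply gen_left. apply phi_cont. apply lim_F0_m.
Qed.

Lemma lim_shift_p (F : R -> R) (L : R) c : is_lim F p_infty L -> is_lim (fun M => F (c + M)) p_infty L.
Proof.
  intros HL. apply (is_lim_comp F (fun M => c + M) p_infty L p_infty); auto.
  apply is_lim_spec. intros K. exists (K - c). intros; lra.
  exists 0; intros; discriminate.
Qed.

Lemma lim_shift_m (F : R -> R) (L : R) c : is_lim F m_infty L -> is_lim (fun M => F (c - M)) p_infty L.
Proof.
  intros HL. apply (is_lim_comp F (fun M => c - M) p_infty L m_infty); auto.
  apply is_lim_spec. intros K. exists (c - K). intros; lra.
  exists 0; intros; discriminate.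
Qed.

Lemma P_sym xa xb xt c :
  is_lim (fun M => RInt (fun s => hP xa xb xt (c - s) + hP xa xb xt (c + s)) 0 M) p_infty (P xa xb xt).
Proof.
  destruct (P_lim xa xb xt) as [Lm [Lp [Hm [Hp E]]]]. rewrite E.
  apply is_lim_ext with (fun M => RInt (hP xa xb xt) 0 (c + M) - RInt (hP xa xb xt) 0 (c - M)).
  intros; apply sym_split, hP_cf.
  apply (is_lim_minus' (fun M => RInt (hP xa xb xt) 0 (c + M)) (fun M => RInt (hP xa xb xt) 0 (c - M))).
  apply (lim_shift_p (fun x => RInt (hP xa xb xt) 0 x)). exact Hp.
  apply (lim_shift_m (fun x => RInt (hP xa xb xt) 0 x)). exact Hm.
Qed.

Lemma pw1 xa xb xt s : xa >= xt -> xt >= 0 -> xb >= 0 -> 0 <= s ->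
  / 2 * (phi (s + (xa - xt)) + phi (s + (xa + xt))) <= hP xa xb xt (xa - s) + hP xa xb xt (xa + s).
Proof.
  intros. unfold hP.
  replace (xa - s - xa) with (- s) by ring. replace (xa + s - xa) with s by ring.
  rewrite w_neg.
  replace (xa - s - xt) with ((xa - xt) - s) by ring. replace (xa - s + xt) with ((xa + xt) - s) by ring.
  replace (xa + s - xt) with ((xa - xt) + s) by ring. replace (xa + s + xt) with ((xa + xt) + s) by ring.
  replace (s + (xa - xt)) with ((xa - xt) + s) by ring. replace (s + (xa + xt)) with ((xa + xt) + s) by ring.
  assert (A1 : phi ((xa - xt) + s) <= phi ((xa - xt) - s)) by (apply phi_shift_le; lra).
  assert (A2 : phi ((xa + xt) + s) <= phi ((xa + xt) - s)) by (apply phi_shift_le; lra).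
  generalize (w_pos s xb) (w_le1 s xb). intros.
  set (W := w s xb) in *.
  assert (0 <= (1 - W) * ((phi (xa - xt - s) - phi (xa - xt + s)) + (phi (xa + xt - s) - phi (xa + xt + s)))).
  apply Rmult_le_pos; lra.
  nra.
Qed.

Lemma pw2 xa xb xt s : xa <= xt -> xb >= 0 -> 0 <= s ->
  / 2 * phi s <= hP xa xb xt (xt - s) + hP xa xb xt (xt + s).
Proof.
  intros. unfold hP.
  replace (xt - s - xt) with (- s) by ring. replace (xt + s - xt) with s by ring. rewrite phi_even.
  assert (B1 : w (- s) xb <= w (xt - s - xa) xb) by (apply w_mono; lra).
  assert (B2 : w s xb <= w (xt + s - xa) xb) by (apply w_mono; lra).
  assert (B3 : w (- s) xb + w s xb = 1) by (rewrite w_neg; ring).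
  generalize (phi_pos s) (phi_pos (xt - s + xt)) (phi_pos (xt + s + xt)) (w_pos (xt - s - xa) xb) (w_pos (xt + s - xa) xb).
  intros. nra.
Qed.

Lemma hsym_cf xa xb xt c : contf (fun s => hP xa xb xt (c - s) + hP xa xb xt (c + s)).
Proof.
  intros z. apply (@continuous_plus R_UniformSpace R_AbsRing R_NormedModule).
  apply (continuous_comp (fun s => c - s) (hP xa xb xt)).
  apply (@ex_derive_continuous R_AbsRing R_NormedModule); auto_derive; trivial. apply hP_cf.
  apply (continuous_comp (fun s => c + s) (hP xa xb xt)).
  apply (@ex_derive_continuous R_AbsRing R_NormedModule); auto_derive; trivial. apply hP_cf.
Qed.

Theorem lemma13 :
  (forall xa xb xt : R, xa >= xt -> xt >= 0 -> xb >= 0 ->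
     P xa xb xt >= / 2 * (1 - Phi (xa - xt)) + / 2 * (1 - Phi (xa + xt))) /\
  (forall xa xb xt : R, 0 <= xa -> xa < xt -> xb >= 0 ->
     P xa xb xt >= / 4).
Proof.
  split.
  - intros xa xb xt H1 H2 H3. rewrite !Phi_F0. apply Rle_ge.
    assert (L : is_lim (fun M => / 2 * ((F0 (M + (xa - xt)) - F0 (xa - xt)) + (F0 (M + (xa + xt)) - F0 (xa + xt))))
                  p_infty (/ 2 * ((/ 2 - F0 (xa - xt)) + (/ 2 - F0 (xa + xt))))).
    { apply (is_lim_scal_l _ (/2) p_infty (((/ 2 - F0 (xa - xt)) + (/ 2 - F0 (xa + xt))))).
      apply (is_lim_plus' (fun M => F0 (M + (xa - xt)) - F0 (xa - xt)) (fun M => F0 (M + (xa + xt)) - F0 (xa + xt))).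
      apply (is_lim_minus' (fun M => F0 (M + (xa - xt))) (fun _ => F0 (xa - xt))).
      apply (is_lim_ext (fun M => F0 ((xa - xt) + M))). intros; f_equal; ring.
      apply lim_shift_p, lim_F0_p. apply is_lim_const.
      apply (is_lim_minus' (fun M => F0 (M + (xa + xt))) (fun _ => F0 (xa + xt))).
      apply (is_lim_ext (fun M => F0 ((xa + xt) + M))). intros; f_equal; ring.
      apply lim_shift_p, lim_F0_p. apply is_lim_const. }
    assert (R : Rbar_le (/ 2 * ((/ 2 - F0 (xa - xt)) + (/ 2 - F0 (xa + xt)))) (P xa xb xt)).
    { eapply is_lim_le_loc. 2: exact L. 2: apply (P_sym xa xb xt xa).
      exists 0. intros M HM.
      replace (/ 2 * (F0 (M + (xa - xt)) - F0 (xa - xt) + (F0 (M + (xa + xt)) - F0 (xa + xt))))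
        with (RInt (fun s => / 2 * (phi (s + (xa - xt)) + phi (s + (xa + xt)))) 0 M).
      apply RInt_le'. lra.
      intros z. apply (@ex_derive_continuous R_AbsRing R_NormedModule). unfold phi. auto_derive.
      repeat split; apply s2pi.
      apply hsym_cf.
      intros s Hs. apply pw1; lra.
      rewrite RInt_sc. rewrite RInt_pl by apply phi_cf. rewrite !RInt_phi_shift.
      replace (0 + (xa - xt)) with (xa - xt) by ring. replace (0 + (xa + xt)) with (xa + xt) by ring. reflexivity.
      intros z. apply (@ex_derive_continuous R_AbsRing R_NormedModule). unfold phi. auto_derive.
      repeat split; apply s2pi. }
    simpl in R. lra.
  - intros xa xb xt H1 H2 H3. apply Rle_ge.
    assert (L : is_lim (fun M => / 2 * F0 M) p_infty (/ 2 * / 2)).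
    { apply (is_lim_scal_l F0 (/2) p_infty (/2)). apply lim_F0_p. }
    assert (R : Rbar_le (/ 2 * / 2) (P xa xb xt)).
    { eapply is_lim_le_loc. 2: exact L. 2: apply (P_sym xa xb xt xt).
      exists 0. intros M HM.
      unfold F0. rewrite <- RInt_sc by (intros ?; apply phi_cont).
      apply RInt_le'. lra.
      intros z. apply (@ex_derive_continuous R_AbsRing R_NormedModule). unfold phi. auto_derive.
      repeat split; try apply s2pi.
      apply hsym_cf.
      intros s Hs. apply pw2; lra. }
    simpl in R. lra.
Qed.
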